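(* Let $n\ge1$, $\lambda\in\mathbb{D}$, and let $\sigma_{n,\lambda}=(\lambda,\lambda,\dots,\lambda)$ ($n$ times). Then $$I\big(\sigma_{n,\lambda},H^2,B^{1/2}_{2,2}\big)\ge\sqrt{\frac{n}{1-|\lambda|}}\left[\frac{(1+|\lambda|)^2-\frac2n-\frac{2|\lambda|}{n}}{2(1+|\lambda|)}\right]^{1/2}$$ (whenever the bracket is nonnegative).
   Context: $\mathbb{D}$ is the open unit disc, $\hat f(k)$ the $k$-th Taylor coefficient. $\|f\|_{H^2}^2=\sum_{k\ge0}|\hat f(k)|^2$; the Dirichlet space $B^{1/2}_{2,2}=\{f:\|f\|^2_{B^{1/2}_{2,2}}=\sum_{k\ge0}(k+1)|\hat f(k)|^2<\infty\}$. For $\lambda\in\mathbb{D}$, $b_\lambda(z)=\frac{\lambda-z}{1-\bar\lambda z}$; for a finite sequence $\sigma=(\lambda_1,\dots,\lambda_n)$ in $\mathbb{D}$ (repetitions allowed), $B_\sigma=\prod_j b_{\lambda_j}$, and ''$g_{|\sigma}=f_{|\sigma}$'' means $f-g\in B_\sigma\mathrm{Hol}(\mathbb{D})$. $I(\sigma,X,Y)=\sup_{f\in X,\|f\|_X\le1}\inf\{\|g\|_Y: g\in Y,\ g_{|\sigma}=f_{|\sigma}\}$. *)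

(* Defs.v *)
From Stdlib Require Export Reals List.
Export ListNotations.
Open Scope R_scope.

Definition Cx : Type := (R * R)%type.
Definition Cre (z : Cx) : R := fst z.
Definition Cim (z : Cx) : R := snd z.
Definition C0 : Cx := (0, 0).
Definition C1 : Cx := (1, 0).
Definition Cadd (z w : Cx) : Cx := (fst z + fst w, snd z + snd w).
Definition Copp (z : Cx) : Cx := (- fst z, - snd z).
Definition Csub (z w : Cx) : Cx := Cadd z (Copp w).
Definition Cmul (z w : Cx) : Cx :=
  (fst z * fst w - snd z * snd w, fst z * snd w + snd z * fst w).
Definition Cconj (z : Cx) : Cx := (fst z, - snd z).
Definition Cnorm2 (z : Cx) : R := fst z * fst z + snd z * snd z.
Definition Cmod (z : Cx) : R := sqrt (Cnorm2 z).
Definition Cinv (z : Cx) : Cx := (fst z / Cnorm2 z, - snd z / Cnorm2 z).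
Definition Cdiv (z w : Cx) : Cx := Cmul z (Cinv w).
Fixpoint Cpow (z : Cx) (k : nat) : Cx :=
  match k with O => C1 | S k' => Cmul z (Cpow z k') end.

Definition inD (z : Cx) : Prop := Cmod z < 1.

Fixpoint Cpartial (u : nat -> Cx) (N : nat) : Cx :=
  match N with O => C0 | S N' => Cadd (Cpartial u N') (u N') end.

Definition Cseries_cv (u : nat -> Cx) (s : Cx) : Prop :=
  Un_cv (fun N => fst (Cpartial u N)) (fst s) /\
  Un_cv (fun N => snd (Cpartial u N)) (snd s).

(* A holomorphic function on D is represented by its Taylor coefficient
   sequence a (a k = \hat f(k)); ps_at a z s : f(z) = s. *)
Definition ps_at (a : nat -> Cx) (z s : Cx) : Prop :=
  Cseries_cv (fun k => Cmul (a k) (Cpow z k)) s.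

Definition is_hol (a : nat -> Cx) : Prop :=
  forall z, inD z -> exists s, ps_at a z s.

Definition blaschke_factor (lam z : Cx) : Cx :=
  Cdiv (Csub lam z) (Csub C1 (Cmul (Cconj lam) z)).

Fixpoint blaschke (sigma : list Cx) (z : Cx) : Cx :=
  match sigma with
  | [] => C1
  | lam :: s => Cmul (blaschke_factor lam z) (blaschke s z)
  end.

(* g_{|sigma} = f_{|sigma} :  f - g \in B_sigma Hol(D) *)
Definition same_trace (sigma : list Cx) (f g : nat -> Cx) : Prop :=
  exists h, is_hol h /\
    forall z, inD z -> forall sf sg sh,
      ps_at f z sf -> ps_at g z sg -> ps_at h z sh ->
      Csub sf sg = Cmul (blaschke sigma z) sh.

(* ||f||^2 = sum_k w k |\hat f(k)|^2 ; H^2: w k = 1 ;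
   Dirichlet space B^{1/2}_{2,2}: w k = k+1. *)
Definition wnorm_sq (w : nat -> R) (a : nat -> Cx) (l : R) : Prop :=
  infinite_sum (fun k => w k * Cnorm2 (a k)) l.

Definition in_space (w : nat -> R) (a : nat -> Cx) : Prop :=
  is_hol a /\ exists l, wnorm_sq w a l.

Definition w_H2 (k : nat) : R := 1.
Definition w_Dirichlet (k : nat) : R := INR k + 1.

(* I(sigma, X, Y) >= c, where
   I(sigma,X,Y) = sup_{f in X, ||f||_X <= 1} inf {||g||_Y : g in Y, g|sigma = f|sigma}
   (a value in [0, +oo]).  "sup_f inf_g ||g|| >= c" is written out as:
   for every c' < c there is f in the unit ball of X such that every
   admissible g has ||g||_Y >= c'. *)
Definition I_ge (sigma : list Cx) (wX wY : nat -> R) (c : R) : Prop :=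
  forall c', c' < c ->
    exists f, in_space wX f /\ (forall l, wnorm_sq wX f l -> sqrt l <= 1) /\
      forall g, in_space wY g -> same_trace sigma f g ->
        forall l, wnorm_sq wY g l -> c' <= sqrt l.

(* Main.v *)
From Coquelicot Require Import Rcomplements Rbar Hierarchy Lim_seq Series.
Require Import Defs.
From Stdlib Require Import Reals List Lra Psatz Ring ClassicalEpsilon.
Notation C1 := Defs.C1.
Open Scope R_scope.


Lemma Cx_eq (z w : Cx) : fst z = fst w -> snd z = snd w -> z = w.
Proof. destruct z, w; simpl; intros; subst; reflexivity. Qed.

Lemma Cx_ring : ring_theory C0 C1 Cadd Cmul Csub Copp (@eq Cx).
Proof.
  constructor; intros; apply Cx_eq; destruct x; try destruct y; try destruct z;
  unfold Cadd, Cmul, Csub, Copp, C0, C1; simpl; ring.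
Qed.
Add Ring Cxring : Cx_ring.

Definition RC (x : R) : Cx := (x, 0).

Lemma Cnorm2_nonneg z : 0 <= Cnorm2 z.
Proof. unfold Cnorm2; nra. Qed.

Lemma Cnorm2_mul z w : Cnorm2 (Cmul z w) = Cnorm2 z * Cnorm2 w.
Proof. destruct z, w; unfold Cnorm2, Cmul; simpl; ring. Qed.

Lemma Cmod_nonneg z : 0 <= Cmod z.
Proof. apply sqrt_pos. Qed.

Lemma Cmod_sq z : Cmod z * Cmod z = Cnorm2 z.
Proof. apply sqrt_sqrt, Cnorm2_nonneg. Qed.

Lemma Cmod_mul z w : Cmod (Cmul z w) = Cmod z * Cmod w.
Proof. unfold Cmod; rewrite Cnorm2_mul; apply sqrt_mult; apply Cnorm2_nonneg. Qed.

Lemma Cmod_le_sq z b : 0 <= b -> Cnorm2 z <= b * b -> Cmod z <= b.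
Proof. intros Hb H. unfold Cmod. rewrite <- (sqrt_square b Hb). apply sqrt_le_1_alt; auto. Qed.

Lemma Cmod_ge_sq z b : 0 <= b -> b * b <= Cnorm2 z -> b <= Cmod z.
Proof. intros Hb H. unfold Cmod. rewrite <- (sqrt_square b Hb). apply sqrt_le_1_alt; auto. Qed.

Lemma Cmod_fst z : Rabs (fst z) <= Cmod z.
Proof. apply Cmod_ge_sq. apply Rabs_pos. unfold Cnorm2.
  rewrite <- Rabs_mult, Rabs_right by nra. nra. Qed.

Lemma Cmod_snd z : Rabs (snd z) <= Cmod z.
Proof. apply Cmod_ge_sq. apply Rabs_pos. unfold Cnorm2.
  rewrite <- Rabs_mult, Rabs_right by nra. nra. Qed.

Lemma Rabs_sq x : Rabs x * Rabs x = x * x.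
Proof. rewrite <- Rabs_mult. apply Rabs_right. nra. Qed.

Lemma Cmod_le_parts z : Cmod z <= Rabs (fst z) + Rabs (snd z).
Proof. pose proof (Rabs_pos (fst z)); pose proof (Rabs_pos (snd z)).
  apply Cmod_le_sq. lra.
  unfold Cnorm2. pose proof (Rabs_sq (fst z)); pose proof (Rabs_sq (snd z)). nra. Qed.

Lemma Cmod_add z w : Cmod (Cadd z w) <= Cmod z + Cmod w.
Proof.
  apply Cmod_le_sq. pose proof (Cmod_nonneg z); pose proof (Cmod_nonneg w); lra.
  pose proof (Cmod_sq z); pose proof (Cmod_sq w).
  pose proof (Cmod_nonneg z); pose proof (Cmod_nonneg w).
  destruct z as [a b], w as [c d]; unfold Cnorm2, Cadd in *; simpl in *.
  set (x := Cmod (a,b)) in *. set (y := Cmod (c,d)) in *.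
  assert (a*c+b*d <= x*y).
  { assert ((a*c+b*d)*(a*c+b*d) <= (x*y)*(x*y)).
    { replace ((x*y)*(x*y)) with ((x*x)*(y*y)) by ring. rewrite H, H0. pose proof (Rle_0_sqr (a*d-b*c)). unfold Rsqr in *. nra. }
    destruct (Rle_dec (a*c+b*d) (x*y)); auto. exfalso. assert (0 <= x*y) by (apply Rmult_le_pos; auto). nra. }
  nra.
Qed.

Lemma Cmod_opp z : Cmod (Copp z) = Cmod z.
Proof. unfold Cmod, Cnorm2, Copp; simpl; f_equal; ring. Qed.

Lemma Cmod_sub z w : Cmod (Csub z w) <= Cmod z + Cmod w.
Proof. unfold Csub. rewrite <- (Cmod_opp w). apply Cmod_add. Qed.

Lemma Cmod_sub_rev z w : Cmod z - Cmod w <= Cmod (Csub z w).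
Proof. assert (z = Cadd (Csub z w) w) by ring. rewrite H at 1.
  pose proof (Cmod_add (Csub z w) w). lra. Qed.

Lemma Cmod_RC x : Cmod (RC x) = Rabs x.
Proof. unfold Cmod, Cnorm2, RC; simpl. rewrite Rmult_0_l, Rplus_0_r.
  rewrite <- (Rabs_sq x). apply sqrt_square. apply Rabs_pos. Qed.

Lemma Cmod_pow z k : Cmod (Cpow z k) = Cmod z ^ k.
Proof. induction k; simpl. unfold C1. fold (RC 1). rewrite Cmod_RC; apply Rabs_R1.
  rewrite Cmod_mul, IHk; ring. Qed.

Lemma Cmod_conj z : Cmod (Cconj z) = Cmod z.
Proof. unfold Cmod, Cnorm2, Cconj; simpl; f_equal; ring. Qed.

Lemma Cmod_C0 : Cmod C0 = 0.
Proof. unfold Cmod, Cnorm2, C0; simpl. rewrite Rmult_0_l, Rplus_0_r. apply sqrt_0. Qed.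

Lemma Cmod_div z w : Cnorm2 w <> 0 -> Cmod (Cdiv z w) = Cmod z / Cmod w.
Proof. intros H. unfold Cdiv. rewrite Cmod_mul. unfold Rdiv. f_equal.
  unfold Cmod. rewrite <- sqrt_inv. f_equal. unfold Cinv, Cnorm2 in *; simpl.
  destruct w as [a b]; simpl in *. field. auto. Qed.

Lemma Cnorm2_pos_of_mod w : 0 < Cmod w -> Cnorm2 w <> 0.
Proof. intros H E. unfold Cmod in H. rewrite E, sqrt_0 in H. lra. Qed.

Lemma Cmul_RC x y : Cmul (RC x) (RC y) = RC (x*y).
Proof. apply Cx_eq; unfold RC, Cmul; simpl; ring. Qed.
Lemma Cadd_RC x y : Cadd (RC x) (RC y) = RC (x+y).
Proof. apply Cx_eq; unfold RC, Cadd; simpl; ring. Qed.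


Fixpoint rsum (u : nat -> R) (N : nat) : R :=
  match N with O => 0 | S N' => rsum u N' + u N' end.

Lemma rsum_ext u v N : (forall k, (k < N)%nat -> u k = v k) -> rsum u N = rsum v N.
Proof. induction N; simpl; intros; auto. rewrite IHN, H; auto. Qed.

Lemma rsum_plus u v N : rsum (fun k => u k + v k) N = rsum u N + rsum v N.
Proof. induction N; simpl; try rewrite IHN; ring. Qed.

Lemma rsum_scal c u N : rsum (fun k => c * u k) N = c * rsum u N.
Proof. induction N; simpl; try rewrite IHN; ring. Qed.

Lemma rsum_le u v N : (forall k, (k < N)%nat -> u k <= v k) -> rsum u N <= rsum v N.
Proof. induction N; simpl; intros; try lra. pose proof (H N ltac:(lia)). pose proof (IHN ltac:(intros; apply H; lia)). lra. Qed.

Lemma rsum_nonneg u N : (forall k, 0 <= u k) -> 0 <= rsum u N.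
Proof. intros. induction N; simpl; try lra. pose proof (H N); lra. Qed.

Lemma rsum_mono u N M : (forall k, 0 <= u k) -> (N <= M)%nat -> rsum u N <= rsum u M.
Proof. intros H HNM. induction HNM; try lra. simpl. pose proof (H m); lra. Qed.

Lemma rsum_sum_f u N : rsum u (S N) = sum_f_R0 u N.
Proof. induction N. simpl; ring. change (rsum u (S (S N))) with (rsum u (S N) + u (S N)). rewrite IHN. reflexivity. Qed.

Lemma rsum_abs u N : Rabs (rsum u N) <= rsum (fun k => Rabs (u k)) N.
Proof. induction N; simpl. rewrite Rabs_R0; lra.
  pose proof (Rabs_triang (rsum u N) (u N)); lra. Qed.

Lemma cv_shift (x : nat -> R) L : Un_cv x L <-> Un_cv (fun N => x (S N)) L.
Proof. rewrite <- !is_lim_seq_Reals. split; intro H.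
  apply (is_lim_seq_incr_1 x L) in H; exact H. apply (is_lim_seq_incr_1 x L); exact H. Qed.

Lemma rsum_inf u L : Un_cv (rsum u) L <-> infinite_sum u L.
Proof. rewrite cv_shift. unfold infinite_sum.
  split; intros H eps He; destruct (H eps He) as [N HN]; exists N; intros m Hm;
  specialize (HN m Hm); unfold Rdist in *; rewrite ?rsum_sum_f in *; auto. Qed.

Lemma rsum_series u L : Un_cv (rsum u) L <-> is_series u L.
Proof. rewrite rsum_inf. symmetry. apply is_series_Reals. Qed.

Lemma cv_le x L B : Un_cv x L -> (forall N, x N <= B) -> L <= B.
Proof. intros H Hb. rewrite <- is_lim_seq_Reals in H.
  assert (Rbar_le L B). apply (is_lim_seq_le x (fun _ => B)); auto. apply is_lim_seq_const.
  simpl in H0. auto. Qed.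

Lemma cv_ge x L B : Un_cv x L -> (forall N, B <= x N) -> B <= L.
Proof. intros H Hb. rewrite <- is_lim_seq_Reals in H.
  assert (Rbar_le B L). apply (is_lim_seq_le (fun _ => B) x); auto. apply is_lim_seq_const.
  simpl in H0. auto. Qed.

Lemma cv_le_ev x L B N0 : Un_cv x L -> (forall N, (N0 <= N)%nat -> x N <= B) -> L <= B.
Proof. intros H Hb. apply (cv_le (fun N => x (N + N0)%nat)). 
  intros eps He. destruct (H eps He) as [M HM]. exists M. intros m Hm. apply HM. lia.
  intros; apply Hb; lia. Qed.

Lemma rsum_le_lim u L N : Un_cv (rsum u) L -> (forall k, 0 <= u k) -> rsum u N <= L.
Proof. intros H Hu. apply (cv_ge (fun M => rsum u (M + N)%nat)).
  intros eps He. destruct (H eps He) as [M HM]. exists M. intros m Hm. apply HM. lia.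
  intros M. apply rsum_mono; auto; lia. Qed.

Lemma rsum_comp u v L : (forall k, Rabs (u k) <= v k) -> Un_cv (rsum v) L ->
  exists L', Un_cv (rsum u) L'.
Proof. intros H Hv. rewrite rsum_series in Hv.
  assert (ex_series u). apply (ex_series_le u v). intros k. apply H. exists L; auto.
  destruct H0 as [L' HL']. exists L'. apply rsum_series. auto. Qed.

Lemma rsum_bounded u B : (forall k, 0 <= u k) -> (forall N, rsum u N <= B) ->
  exists L, Un_cv (rsum u) L.
Proof. intros Hu Hb. destruct (growing_cv (rsum u)) as [L HL].
  intros N; simpl; pose proof (Hu N); lra. exists B. intros x [N ->]. auto. exists L; auto. Qed.

Lemma rsum_terms0 u L : Un_cv (rsum u) L -> Un_cv u 0.
Proof. intros H. rewrite rsum_series in H. apply is_lim_seq_Reals. apply ex_series_lim_0. exists L; auto. Qed.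

Lemma cv_unique x L1 L2 : Un_cv x L1 -> Un_cv x L2 -> L1 = L2.
Proof. apply UL_sequence. Qed.


Lemma rsum_telescope d K : rsum (fun k => d k - d (S k)) K = d O - d K.
Proof. induction K; simpl; try rewrite IHK; ring. Qed.

Lemma pow_diff_le x m : 0 <= x -> (x+1)^(S m) - x^(S m) <= INR (S m) * (x+1)^m.
Proof. intros Hx. induction m.
  simpl; lra.
  assert ((x+1)^(S (S m)) - x^(S (S m)) = (x+1)*((x+1)^(S m) - x^(S m)) + x^(S m)) by (simpl; ring).
  rewrite H. rewrite S_INR. 
  assert (x^(S m) <= (x+1)^(S m)) by (apply pow_incr; lra).
  assert ((x+1) * ((x+1)^(S m) - x^(S m)) <= (x+1) * (INR (S m) * (x+1)^m)) by (apply Rmult_le_compat_l; lra).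
  assert ((x+1)^(S (S m)) = (x+1)*(x+1)^(S m)) by (simpl; ring).
  assert ((x+1)^(S m) = (x+1)*(x+1)^m) by (simpl; ring).
  nra.
Qed.

Lemma geom_bound m q : 0 <= q < 1 -> exists B, forall K, rsum (fun k => (INR k+1)^m * q^k) K <= B.
Proof. intros Hq. induction m.
- exists (/(1-q)). intros K.
  assert (E: (1-q) * rsum (fun k => (INR k + 1)^0 * q^k) K = 1 - q^K).
  { rewrite <- rsum_scal. rewrite (rsum_ext _ (fun k => q^k - q^(S k))). rewrite rsum_telescope. simpl; ring.
    intros; simpl; ring. }
  assert (0 <= q^K) by (apply pow_le; lra).
  apply (Rmult_le_reg_l (1-q)). lra. rewrite E. rewrite Rinv_r by lra. lra.
- destruct IHm as [B HB]. exists (INR (S m) * B / (1-q)). intros K.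
  apply (Rmult_le_reg_l (1-q)). lra.
  replace ((1 - q) * (INR (S m) * B / (1 - q))) with (INR (S m) * B) by (field; lra).
  rewrite <- rsum_scal.
  assert (forall k, (1-q) * ((INR k + 1)^(S m) * q^k) =
     ((INR k + 1)^(S m) - INR k ^(S m)) * q^k + (INR k^(S m) * q^k - INR (S k)^(S m) * q^(S k))).
  { intros k. rewrite S_INR. simpl. ring. }
  rewrite (rsum_ext _ _ K (fun k _ => H k)). rewrite rsum_plus.
  rewrite (rsum_telescope (fun k => INR k ^ (S m) * q^k)).
  assert (0 <= INR K ^ S m * q ^ K) by (apply Rmult_le_pos; apply pow_le; try apply pos_INR; lra).
  assert (rsum (fun k => ((INR k + 1) ^ S m - INR k ^ S m) * q ^ k) K <= INR (S m) * B).
  { rewrite <- (Rmult_le_compat_l (INR (S m)) _ _ (pos_INR _) (HB K)).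
    rewrite <- rsum_scal. apply rsum_le. intros k _. rewrite <- Rmult_assoc.
    apply Rmult_le_compat_r. apply pow_le; lra. apply pow_diff_le, pos_INR. }
  assert (INR 0 ^ S m * q ^ 0 = 0) by (simpl; ring). lra.
Qed.

Lemma poly_geom m q : 0 <= q < 1 -> exists L, Un_cv (rsum (fun k => (INR k+1)^m * q^k)) L.
Proof. intros Hq. destruct (geom_bound m q Hq) as [B HB]. apply (rsum_bounded _ B); auto.
  intros k. apply Rmult_le_pos; apply pow_le. pose proof (pos_INR k); lra. lra. Qed.


Definition Ccv (x : nat -> Cx) (l : Cx) : Prop :=
  Un_cv (fun N => fst (x N)) (fst l) /\ Un_cv (fun N => snd (x N)) (snd l).

Lemma Ccv_plus x y l m : Ccv x l -> Ccv y m -> Ccv (fun N => Cadd (x N) (y N)) (Cadd l m).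
Proof. intros [H1 H2] [H3 H4]; split; simpl; apply CV_plus; auto. Qed.

Lemma Ccv_const c : Ccv (fun _ => c) c.
Proof. split; intros eps He; exists O; intros; unfold Rdist; rewrite Rminus_diag, Rabs_R0; auto. Qed.

Lemma Ccv_scal c x l : Ccv x l -> Ccv (fun N => Cmul c (x N)) (Cmul c l).
Proof. intros [H1 H2]; unfold Cmul; split; simpl.
  apply CV_minus; apply CV_mult; auto; apply (Ccv_const c).
  apply CV_plus; apply CV_mult; auto; apply (Ccv_const c). Qed.

Lemma Ccv_opp x l : Ccv x l -> Ccv (fun N => Copp (x N)) (Copp l).
Proof. intros H. assert (E: forall z, Copp z = Cmul (RC (-1)) z) by (intros; apply Cx_eq; unfold RC, Copp, Cmul; simpl; ring).
  rewrite E. assert (Ccv (fun N => Cmul (RC (-1)) (x N)) (Cmul (RC (-1)) l)) by (apply Ccv_scal; auto).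
  destruct H0; split; intros eps He; [destruct (H0 eps He) as [N HN] | destruct (H1 eps He) as [N HN]];
  exists N; intros m Hm; rewrite E; apply HN; auto. Qed.

Lemma Ccv_sub x y l m : Ccv x l -> Ccv y m -> Ccv (fun N => Csub (x N) (y N)) (Csub l m).
Proof. intros. unfold Csub. apply Ccv_plus; auto. apply Ccv_opp; auto. Qed.

Lemma Ccv_ext x y l : (forall N, x N = y N) -> Ccv x l -> Ccv y l.
Proof. intros E [H1 H2]; split; intros eps He; [destruct (H1 eps He) as [N HN] | destruct (H2 eps He) as [N HN]];
  exists N; intros m Hm; rewrite <- E; apply HN; auto. Qed.

Lemma Ccv_ev x y l N0 : (forall N, (N0 <= N)%nat -> x N = y N) -> Ccv x l -> Ccv y l.
Proof. intros E [H1 H2]; split; intros eps He; [destruct (H1 eps He) as [N HN] | destruct (H2 eps He) as [N HN]];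
  exists (N + N0)%nat; intros m Hm; rewrite <- E by lia; apply HN; lia. Qed.

Lemma Ccv_unique x l m : Ccv x l -> Ccv x m -> l = m.
Proof. intros [H1 H2] [H3 H4]. apply Cx_eq; eapply cv_unique; eauto. Qed.

Lemma Ccv_norm_le_ev x l B N0 : Ccv x l -> (forall N, (N0 <= N)%nat -> Cmod (x N) <= B) -> Cmod l <= B.
Proof. intros [H1 H2] Hb. assert (HB: 0 <= B) by (pose proof (Hb N0 (le_n _)); pose proof (Cmod_nonneg (x N0)); lra).
  apply Cmod_le_sq; auto.
  assert (Un_cv (fun N => Cnorm2 (x N)) (Cnorm2 l)) by (unfold Cnorm2; apply CV_plus; apply CV_mult; auto).
  apply (cv_le_ev _ _ _ N0 H). intros N HN. rewrite <- Cmod_sq. pose proof (Hb N HN). pose proof (Cmod_nonneg (x N)).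
  nra. Qed.

Lemma Ccv_norm_le x l B : Ccv x l -> (forall N, Cmod (x N) <= B) -> Cmod l <= B.
Proof. intros H Hb. apply (Ccv_norm_le_ev x l B O H). intros; auto. Qed.

Lemma Cpartial_S u N : Cpartial u (S N) = Cadd (Cpartial u N) (u N).
Proof. reflexivity. Qed.

Lemma Cpartial_plus u v N : Cpartial (fun k => Cadd (u k) (v k)) N = Cadd (Cpartial u N) (Cpartial v N).
Proof. induction N; simpl. unfold C0, Cadd; simpl. apply Cx_eq; simpl; ring. rewrite IHN; ring. Qed.

Lemma Cpartial_sub u v N : Cpartial (fun k => Csub (u k) (v k)) N = Csub (Cpartial u N) (Cpartial v N).
Proof. induction N; simpl. apply Cx_eq; unfold C0, Csub, Cadd, Copp; simpl; ring. rewrite IHN; ring. Qed.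

Lemma Cpartial_scal c u N : Cpartial (fun k => Cmul c (u k)) N = Cmul c (Cpartial u N).
Proof. induction N; simpl. apply Cx_eq; unfold C0, Cmul; simpl; ring. rewrite IHN; ring. Qed.

Lemma Cpartial_ext u v N : (forall k, (k < N)%nat -> u k = v k) -> Cpartial u N = Cpartial v N.
Proof. induction N; simpl; intros; auto. rewrite IHN, H; auto. Qed.

Lemma Cpartial_fst u N : fst (Cpartial u N) = rsum (fun k => fst (u k)) N.
Proof. induction N; simpl; auto. rewrite IHN; auto. Qed.
Lemma Cpartial_snd u N : snd (Cpartial u N) = rsum (fun k => snd (u k)) N.
Proof. induction N; simpl; auto. rewrite IHN; auto. Qed.

Lemma Cpartial_norm u N : Cmod (Cpartial u N) <= rsum (fun k => Cmod (u k)) N.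
Proof. induction N; simpl. rewrite Cmod_C0; lra. pose proof (Cmod_add (Cpartial u N) (u N)); lra. Qed.



Lemma Cser_abs u v L : (forall k, Cmod (u k) <= v k) -> Un_cv (rsum v) L -> exists s, Ccv (Cpartial u) s.
Proof. intros H Hv.
  destruct (rsum_comp (fun k => fst (u k)) v L) as [L1 H1]; auto.
  intros k; pose proof (Cmod_fst (u k)); pose proof (H k); lra.
  destruct (rsum_comp (fun k => snd (u k)) v L) as [L2 H2]; auto.
  intros k; pose proof (Cmod_snd (u k)); pose proof (H k); lra.
  exists (L1, L2). split; simpl.
  - intros eps He; destruct (H1 eps He) as [N HN]; exists N; intros; rewrite Cpartial_fst; auto.
  - intros eps He; destruct (H2 eps He) as [N HN]; exists N; intros; rewrite Cpartial_snd; auto.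
Qed.

Lemma cv_bounded x l : Un_cv x l -> exists M, forall k, Rabs (x k) <= M.
Proof. intros H. destruct (H 1 Rlt_0_1) as [N HN].
  exists (Rabs l + 1 + rsum (fun k => Rabs (x k)) N). intros k.
  assert (0 <= rsum (fun k => Rabs (x k)) N) by (apply rsum_nonneg; intros; apply Rabs_pos).
  destruct (Compare_dec.le_lt_dec N k).
  - specialize (HN k l0). unfold Rdist in HN. pose proof (Rabs_triang_inv (x k) l). lra.
  - assert (Rabs (x k) <= rsum (fun k => Rabs (x k)) N).
    { clear HN. induction N. lia. simpl. destruct (Nat.eq_dec k N). subst.
      pose proof (rsum_nonneg (fun k => Rabs (x k)) N (fun k => Rabs_pos _)). lra.
      pose proof (Rabs_pos (x N)). assert (k < N)%nat by lia.
      assert (0 <= rsum (fun k => Rabs (x k)) N) by (apply rsum_nonneg; intros; apply Rabs_pos).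
      specialize (IHN H3 H2). lra. }
    pose proof (Rabs_pos l). lra.
Qed.

Lemma Cser_terms_bounded u s : Ccv (Cpartial u) s -> exists M, forall k, Cmod (u k) <= M.
Proof. intros [H1 H2].
  assert (T1: Un_cv (fun k => fst (u k)) 0).
  { apply (rsum_terms0 _ (fst s)). intros eps He; destruct (H1 eps He) as [N HN]; exists N; intros; rewrite <- Cpartial_fst; auto. }
  assert (T2: Un_cv (fun k => snd (u k)) 0).
  { apply (rsum_terms0 _ (snd s)). intros eps He; destruct (H2 eps He) as [N HN]; exists N; intros; rewrite <- Cpartial_snd; auto. }
  destruct (cv_bounded _ _ T1) as [M1 HM1]. destruct (cv_bounded _ _ T2) as [M2 HM2].
  exists (M1 + M2). intros k. pose proof (Cmod_le_parts (u k)). specialize (HM1 k). specialize (HM2 k). lra.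
Qed.


Lemma ps_at_Ccv a z s : ps_at a z s <-> Ccv (Cpartial (fun k => Cmul (a k) (Cpow z k))) s.
Proof. reflexivity. Qed.

Lemma rsum_cv_scal c u L : Un_cv (rsum u) L -> Un_cv (rsum (fun k => c * u k)) (c * L).
Proof. intros H. apply (Un_cv_ext (fun N => c * rsum u N)). intros; rewrite rsum_scal; auto.
  apply CV_mult; auto. intros eps He; exists O; intros; unfold Rdist; rewrite Rminus_diag, Rabs_R0; auto. Qed.

Lemma coef_growth a rho : is_hol a -> 0 < rho < 1 -> exists M, forall k, Cmod (a k) * rho^k <= M.
Proof. intros Ha Hr. destruct (Ha (RC rho)) as [s Hs].
  unfold inD. rewrite Cmod_RC, Rabs_right; lra.
  destruct (Cser_terms_bounded _ _ Hs) as [M HM]. exists M. intros k.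
  specialize (HM k). rewrite Cmod_mul, Cmod_pow, Cmod_RC, Rabs_right in HM by lra. auto. Qed.

Lemma hol_poly_sum a R1 m : is_hol a -> 0 <= R1 < 1 ->
  exists L, Un_cv (rsum (fun k => (INR k+1)^m * R1^k * Cmod (a k))) L.
Proof. intros Ha HR. set (rho := (1+R1)/2). destruct (coef_growth a rho Ha) as [M HM]. unfold rho; lra.
  set (q := R1/rho). assert (Hq: 0 <= q < 1). { unfold q, rho. split. unfold Rdiv; apply Rmult_le_pos; [lra|]; apply Rlt_le, Rinv_0_lt_compat; lra.
    apply Rmult_lt_reg_r with ((1+R1)/2). lra. unfold Rdiv. rewrite Rmult_assoc, Rinv_l; lra. }
  destruct (poly_geom m q Hq) as [L HL].
  apply (rsum_comp _ (fun k => M * ((INR k + 1)^m * q^k)) (M * L)).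
  2: apply rsum_cv_scal; auto.
  intros k. assert (R1 ^ k = q^k * rho^k). { rewrite <- Rpow_mult_distr. f_equal. unfold q; field. unfold rho; lra. }
  rewrite H. pose proof (HM k). assert (0 <= (INR k+1)^m * q^k).
  { apply Rmult_le_pos; apply pow_le; try lra. pose proof (pos_INR k); lra. }
  assert (0 <= q^k) by (apply pow_le; lra). assert (0 <= rho^k) by (apply pow_le; unfold rho; lra).
  pose proof (Cmod_nonneg (a k)).
  rewrite Rabs_right. 2: { apply Rle_ge. repeat apply Rmult_le_pos; auto; apply pow_le; pose proof (pos_INR k); lra. }
  replace ((INR k + 1) ^ m * (q ^ k * rho ^ k) * Cmod (a k)) with (((INR k + 1)^m * q^k) * (Cmod (a k) * rho^k)) by ring.
  rewrite (Rmult_comm M). apply Rmult_le_compat_l; auto.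
Qed.

Lemma hol_bound a rho : is_hol a -> 0 <= rho < 1 ->
  exists H, forall z s, Cmod z <= rho -> ps_at a z s -> Cmod s <= H.
Proof. intros Ha Hr. destruct (hol_poly_sum a rho 0 Ha Hr) as [L HL].
  exists L. intros z s Hz Hs. apply (Ccv_norm_le _ _ L Hs). intros N.
  eapply Rle_trans. apply Cpartial_norm. apply (Rle_trans _ (rsum (fun k => (INR k + 1) ^ 0 * rho ^ k * Cmod (a k)) N)).
  apply rsum_le. intros k _. rewrite Cmod_mul, Cmod_pow. rewrite pow_O.
  assert (Cmod z ^ k <= rho^k) by (apply pow_incr; split; auto; apply Cmod_nonneg). pose proof (Cmod_nonneg (a k)). nra.
  apply rsum_le_lim; auto. intros k. apply Rmult_le_pos. apply Rmult_le_pos; apply pow_le; try lra.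
  pose proof (pos_INR k); lra. apply Cmod_nonneg.
Qed.


Fixpoint binom (k j : nat) : R :=
  match k, j with
  | _, O => 1
  | O, S _ => 0
  | S k', S j' => binom k' j' + binom k' (S j')
  end.

Lemma binom_S k j : binom (S k) (S j) = binom k j + binom k (S j).
Proof. reflexivity. Qed.

Lemma binom_gt k j : (k < j)%nat -> binom k j = 0.
Proof. revert j; induction k; intros j H; destruct j; try lia; simpl; auto.
  rewrite !IHk by lia. ring. Qed.

Lemma binom_nonneg k j : 0 <= binom k j.
Proof. revert j; induction k; intros j; destruct j; simpl; try lra. pose proof (IHk j); pose proof (IHk (S j)); lra. Qed.

Lemma binom_le k j : binom k j <= (INR k + 1)^j.
Proof. revert j; induction k; intros j.
  - destruct j. simpl; lra. simpl binom. apply pow_le. simpl; lra.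
  - destruct j. simpl; lra. rewrite binom_S. rewrite S_INR.
    pose proof (IHk j); pose proof (IHk (S j)).
    assert ((INR k + 1)^j <= (INR k + 1 + 1)^j) by (apply pow_incr; pose proof (pos_INR k); lra).
    simpl in H0. simpl. pose proof (pos_INR k). pose proof (pow_le (INR k + 1) j ltac:(lra)). nra. Qed.

Lemma binom_0 k : binom k O = 1.
Proof. destruct k; reflexivity. Qed.

Lemma binom_rel k j : (INR j + 1) * binom k (S j) = (INR k - INR j) * binom k j.
Proof. revert j; induction k; intros j.
  - destruct j; simpl; ring.
  - destruct j.
    + pose proof (IHk O). rewrite binom_S in *. rewrite !binom_0 in *. rewrite S_INR. change (INR 0) with 0 in *. lra.
    + rewrite !binom_S. pose proof (IHk j). pose proof (IHk (S j)). rewrite !S_INR in *. nra.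
Qed.

Lemma binom_absorb k j : (INR k + 1) * binom k j = (INR j + 1) * binom (S k) (S j).
Proof. rewrite binom_S. rewrite Rmult_plus_distr_l, binom_rel. ring. Qed.

Lemma binom_diag k : binom k k = 1.
Proof. induction k; simpl; auto. rewrite IHk, binom_gt by lia. ring. Qed.

Lemma binom_0_S j : binom O (S j) = 0.
Proof. reflexivity. Qed.

Section Taylor.
Variable lam : Cx.

Definition Tc (j k : nat) : Cx := Cmul (RC (binom k j)) (Cpow lam (k - j)).

Lemma Tc_succ_0 k : Tc O (S k) = Cmul lam (Tc O k).
Proof. unfold Tc. rewrite !binom_0. rewrite !Nat.sub_0_r. simpl Cpow. change (RC 1) with C1. ring. Qed.

Lemma Tc_succ j k : Tc (S j) (S k) = Cadd (Cmul lam (Tc (S j) k)) (Tc j k).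
Proof. unfold Tc. rewrite binom_S. simpl (S k - S j)%nat.
  destruct (Compare_dec.le_lt_dec (S j) k).
  - replace (k - j)%nat with (S (k - S j)) by lia. simpl Cpow.
    rewrite <- Cadd_RC. ring.
  - rewrite (binom_gt k (S j)) by lia. rewrite <- Cadd_RC.
    apply Cx_eq; unfold RC, Cmul, Cadd; simpl; ring.
Qed.

Variable t : R.
Definition Sn (n k : nat) : Cx := Cpartial (fun j => Cmul (Tc j k) (RC (t^j))) n.

Lemma Sn_rec m k : Sn (S (S m)) (S k) = Cadd (Cmul lam (Sn (S (S m)) k)) (Cmul (RC t) (Sn (S m) k)).
Proof. induction m.
  - unfold Sn; simpl. rewrite Tc_succ_0, Tc_succ. unfold C0; apply Cx_eq; unfold RC, Cmul, Cadd; simpl; ring.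
  - unfold Sn in *. rewrite (Cpartial_S _ (S (S m))). rewrite IHm.
    rewrite (Cpartial_S _ (S (S m)) ). rewrite (Cpartial_S _ (S m)).
    rewrite Tc_succ. replace (RC (t ^ S (S m))) with (Cmul (RC t) (RC (t^ S m))) by (rewrite Cmul_RC; reflexivity).
    ring.
Qed.

Lemma Sn_0 m : Sn (S m) O = C1.
Proof. induction m. unfold Sn, Tc; simpl. apply Cx_eq; unfold RC, Cmul, Cadd, C0, C1; simpl; ring.
  unfold Sn in *. rewrite Cpartial_S, IHm. unfold Tc. rewrite binom_0_S. apply Cx_eq; unfold RC, Cmul, Cadd, C0, C1; simpl; ring. Qed.

Definition zt := Cadd lam (RC t).
Definition En (n k : nat) : Cx := Csub (Cpow zt k) (Sn n k).

Lemma En_0 m : En (S m) O = C0.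
Proof. unfold En. rewrite Sn_0. simpl. ring. Qed.

Lemma Sn_S m k : Sn (S (S m)) k = Cadd (Sn (S m) k) (Cmul (Tc (S m) k) (RC (t^(S m)))).
Proof. reflexivity. Qed.

Lemma En_rec m k : En (S m) (S k) = Cadd (Cmul zt (En (S m) k)) (Cmul (Tc m k) (RC (t^(S m)))).
Proof. destruct m.
  - unfold En, Sn. simpl. rewrite Tc_succ_0. unfold zt. apply Cx_eq; unfold RC, Cmul, Cadd, Csub, Copp, C0, C1; simpl; ring.
  - unfold En. rewrite Sn_rec. rewrite Sn_S. simpl Cpow. unfold zt.
    replace (RC (t ^ S (S m))) with (Cmul (RC t) (RC (t^ S m))) by (rewrite Cmul_RC; reflexivity). ring.
Qed.

Lemma Tc_bound R1 j k : Cmod lam <= R1 -> 0 < R1 -> Cmod (Tc j k) <= (INR k + 1)^j * R1^k / R1^j.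
Proof. intros Hl HR. unfold Tc. rewrite Cmod_mul, Cmod_pow, Cmod_RC, Rabs_right by (apply Rle_ge, binom_nonneg).
  destruct (Compare_dec.le_lt_dec j k).
  - replace (R1^k) with (R1^(k-j) * R1^j) by (rewrite <- pow_add; f_equal; lia).
    replace ((INR k + 1) ^ j * (R1 ^ (k - j) * R1 ^ j) / R1 ^ j) with ((INR k + 1) ^ j * R1 ^ (k - j)) by (field; apply pow_nonzero; lra).
    apply Rmult_le_compat. apply binom_nonneg. apply pow_le, Cmod_nonneg. apply binom_le. apply pow_incr. split; auto; apply Cmod_nonneg.
  - rewrite binom_gt by lia. rewrite Rmult_0_l. unfold Rdiv. apply Rmult_le_pos. apply Rmult_le_pos; apply pow_le.
    pose proof (pos_INR k); lra. lra. apply Rlt_le, Rinv_0_lt_compat, pow_lt; lra.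
Qed.

Lemma En_bound R1 m k : Cmod lam <= R1 -> 0 < R1 -> 0 <= t -> Cmod zt <= R1 ->
  Cmod (En (S m) k) <= t^(S m) * ((INR k + 1)^(S m) * R1^k / R1^(S m)).
Proof. intros Hl HR Ht Hz. induction k.
  - rewrite En_0, Cmod_C0. apply Rmult_le_pos. apply pow_le; auto. unfold Rdiv. apply Rmult_le_pos.
    apply Rmult_le_pos; apply pow_le; simpl; lra. apply Rlt_le, Rinv_0_lt_compat, pow_lt; lra.
  - rewrite En_rec. eapply Rle_trans. apply Cmod_add. rewrite !Cmod_mul, Cmod_RC, Rabs_right by (apply Rle_ge, pow_le; auto).
    pose proof (Tc_bound R1 m k Hl HR). pose proof (Cmod_nonneg (En (S m) k)).
    assert (A: Cmod zt * Cmod (En (S m) k) <= R1 * (t ^ S m * ((INR k + 1) ^ S m * R1 ^ k / R1 ^ S m))).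
    { apply Rmult_le_compat; auto. apply Cmod_nonneg. }
    assert (B: Cmod (Tc m k) * t^(S m) <= (INR k + 1) ^ m * R1 ^ k / R1 ^ m * t^(S m)).
    { apply Rmult_le_compat_r; auto. apply pow_le; auto. }
    assert (C: (INR k + 1) ^ S m + (INR k + 1)^m <= (INR (S k) + 1)^(S m)).
    { rewrite S_INR. simpl. assert ((INR k + 1)^m <= (INR k + 1 + 1)^m) by (apply pow_incr; pose proof (pos_INR k); lra).
      pose proof (pos_INR k). pose proof (pow_le (INR k + 1) m ltac:(lra)). nra. }
    assert (R1 * (t ^ S m * ((INR k + 1) ^ S m * R1 ^ k / R1 ^ S m)) + (INR k + 1) ^ m * R1 ^ k / R1 ^ m * t ^ S m
       = t^(S m) * (((INR k + 1) ^ S m + (INR k + 1)^m) * R1^(S k) / R1^(S m))).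
    { simpl. field. split. apply pow_nonzero; lra. lra. }
    assert (t ^ S m * (((INR k + 1) ^ S m + (INR k + 1) ^ m) * R1 ^ S k / R1 ^ S m) <=
            t ^ S m * ((INR (S k) + 1) ^ S m * R1 ^ S k / R1 ^ S m)).
    { apply Rmult_le_compat_l. apply pow_le; auto. unfold Rdiv. apply Rmult_le_compat_r.
      apply Rlt_le, Rinv_0_lt_compat, pow_lt; lra. apply Rmult_le_compat_r. apply pow_le; lra. auto. }
    lra.
Qed.

End Taylor.


Lemma rsum_shift u m : rsum u (S m) = u O + rsum (fun j => u (S j)) m.
Proof. induction m. simpl; ring. change (rsum u (S (S m))) with (rsum u (S m) + u (S m)). rewrite IHm. simpl; ring. Qed.

Lemma pow_le1 x k : 0 <= x <= 1 -> x^k <= 1.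
Proof. intros H. induction k; simpl; try lra. pose proof (pow_le x k ltac:(lra)). nra. Qed.

Lemma poly_zero n : forall (c : nat -> R) C d, 0 < d ->
  (forall t, 0 < t <= d -> Rabs (rsum (fun j => c j * t^j) n) <= C * t^n) ->
  forall j, (j < n)%nat -> c j = 0.
Proof. induction n; intros c C d Hd H j Hj. lia.
  set (K := rsum (fun j => Rabs (c (S j))) n).
  assert (HK: 0 <= K) by (apply rsum_nonneg; intros; apply Rabs_pos).
  assert (Hc0: c O = 0).
  { destruct (Req_dec (c O) 0) as [E|E]; auto. exfalso.
    set (A := K + Rabs C + 1).
    assert (HA: 0 < A) by (unfold A; pose proof (Rabs_pos C); lra).
    set (t := Rmin d (Rmin 1 (Rabs (c O) / (2 * A)))).
    assert (Hc: 0 < Rabs (c O)) by (apply Rabs_pos_lt; auto).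
    assert (Ht0: 0 < t). { unfold t. apply Rmin_pos; auto. apply Rmin_pos. lra. apply Rdiv_lt_0_compat; lra. }
    assert (Ht1: t <= 1) by (unfold t; eapply Rle_trans; [apply Rmin_r | apply Rmin_l]).
    assert (Ht2: t <= Rabs (c O) / (2*A)) by (unfold t; eapply Rle_trans; [apply Rmin_r | apply Rmin_r]).
    assert (Htd: t <= d) by (unfold t; apply Rmin_l).
    specialize (H t (conj Ht0 Htd)). rewrite rsum_shift in H. simpl pow in H. rewrite Rmult_1_r in H.
    assert (E2: rsum (fun j => c (S j) * (t * t^j)) n = t * rsum (fun j => c (S j) * t^j) n).
    { rewrite <- rsum_scal. apply rsum_ext; intros; ring. }
    rewrite E2 in H.
    assert (B1: Rabs (rsum (fun j => c (S j) * t^j) n) <= K).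
    { eapply Rle_trans. apply rsum_abs. apply rsum_le. intros k _. rewrite Rabs_mult.
      rewrite (Rabs_right (t^k)) by (apply Rle_ge, pow_le; lra).
      assert (t^k <= 1) by (apply pow_le1; lra). pose proof (Rabs_pos (c (S k))). nra. }
    assert (B2: Rabs (C * (t * t^n)) <= Rabs C * t).
    { rewrite !Rabs_mult. rewrite (Rabs_right t) by lra. rewrite (Rabs_right (t^n)) by (apply Rle_ge, pow_le; lra).
      assert (t^n <= 1) by (apply pow_le1; lra). apply Rmult_le_compat_l. apply Rabs_pos. nra. }
    assert (Rabs (c O) <= t * A).
    { pose proof (Rabs_triang_inv (c O) (- (t * rsum (fun j => c (S j) * t ^ j) n))).
      replace (c O - - (t * rsum (fun j => c (S j) * t ^ j) n)) with (c O + t * rsum (fun j => c (S j) * t ^ j) n) in H0 by ring.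
      rewrite Rabs_Ropp, Rabs_mult, (Rabs_right t) in H0 by lra.
      pose proof (Rle_abs (C * (t * t^n))). unfold A. nra. }
    assert (t * A <= Rabs (c O) / 2). { apply (Rmult_le_compat_r A) in Ht2; [|lra].
      replace (Rabs (c O) / (2*A) * A) with (Rabs (c O)/2) in Ht2 by (field; lra). auto. }
    lra. }
  destruct j. auto.
  apply (IHn (fun j => c (S j)) C d Hd); [|lia].
  intros t Ht. specialize (H t Ht). rewrite rsum_shift, Hc0 in H.
  assert (E2: rsum (fun j => c (S j) * t^(S j)) n = t * rsum (fun j => c (S j) * t^j) n).
  { rewrite <- rsum_scal. apply rsum_ext; intros; simpl; ring. }
  rewrite E2 in H. rewrite Rmult_0_l, Rplus_0_l, Rabs_mult, (Rabs_right t) in H by lra.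
  simpl in H. apply (Rmult_le_reg_l t). lra. lra.
Qed.

Lemma Cpartial_zero N : Cpartial (fun _ => C0) N = C0.
Proof. induction N; simpl; auto. rewrite IHN. apply Cx_eq; unfold Cadd, C0; simpl; ring. Qed.

Lemma Cpartial_exchange (w : nat -> nat -> Cx) n N :
  Cpartial (fun k => Cpartial (fun j => w j k) n) N = Cpartial (fun j => Cpartial (fun k => w j k) N) n.
Proof. induction n; simpl. apply Cpartial_zero. rewrite Cpartial_plus, IHn. reflexivity. Qed.

Lemma Ccv_finsum (x : nat -> nat -> Cx) (l : nat -> Cx) n :
  (forall j, (j < n)%nat -> Ccv (x j) (l j)) -> Ccv (fun N => Cpartial (fun j => x j N) n) (Cpartial l n).
Proof. induction n; intros H; simpl. apply Ccv_const. apply Ccv_plus. apply IHn; intros; apply H; lia. apply H; lia. Qed.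

Section TaylorMain.
Variables (lam : Cx) (R1 : R) (F : nat -> Cx) (m : nat) (L : R).
Hypothesis HR : Cmod lam < R1 < 1.
Hypothesis HF : Un_cv (rsum (fun k => (INR k+1)^(S m) * R1^k * Cmod (F k))) L.

Lemma R1pos : 0 < R1.
Proof. pose proof (Cmod_nonneg lam); lra. Qed.

Lemma T_exists j : (j <= S m)%nat -> exists T, Ccv (Cpartial (fun k => Cmul (Tc lam j k) (F k))) T.
Proof. intros Hj. pose proof R1pos.
  apply (Cser_abs _ (fun k => / R1^j * ((INR k+1)^(S m) * R1^k * Cmod (F k))) (/R1^j * L)).
  2: apply rsum_cv_scal; auto.
  intros k. rewrite Cmod_mul. pose proof (Tc_bound lam R1 j k ltac:(lra) H).
  assert ((INR k + 1)^j <= (INR k + 1)^(S m)) by (apply Rle_pow; [pose proof (pos_INR k); lra | auto]).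
  assert (0 < /R1^j) by (apply Rinv_0_lt_compat, pow_lt; lra).
  assert (0 <= R1^k) by (apply pow_le; lra). pose proof (Cmod_nonneg (F k)).
  apply (Rle_trans _ ((INR k + 1) ^ j * R1 ^ k / R1 ^ j * Cmod (F k))).
  apply Rmult_le_compat_r; auto.
  unfold Rdiv. replace (/ R1 ^ j * ((INR k + 1) ^ S m * R1 ^ k * Cmod (F k))) with 
    ((INR k + 1) ^ S m * (R1 ^ k * / R1 ^ j * Cmod (F k))) by ring.
  replace ((INR k + 1) ^ j * R1 ^ k * / R1 ^ j * Cmod (F k)) with ((INR k + 1) ^ j * (R1 ^ k * / R1 ^ j * Cmod (F k))) by ring.
  apply Rmult_le_compat_r; auto. apply Rmult_le_pos; auto. apply Rmult_le_pos; lra.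
Qed.

Lemma taylor_est (t : R) (V : Cx) (T : nat -> Cx) :
  0 <= t -> Cmod lam + t <= R1 ->
  Ccv (Cpartial (fun k => Cmul (F k) (Cpow (zt lam t) k))) V ->
  (forall j, (j < S m)%nat -> Ccv (Cpartial (fun k => Cmul (Tc lam j k) (F k))) (T j)) ->
  Cmod (Csub V (Cpartial (fun j => Cmul (T j) (RC (t^j))) (S m))) <= t^(S m) * (L / R1^(S m)).
Proof. intros Ht Htl HV HT. pose proof R1pos as HR1.
  assert (Hz: Cmod (zt lam t) <= R1). { unfold zt. eapply Rle_trans. apply Cmod_add. rewrite Cmod_RC, Rabs_right; lra. }
  set (Q := fun N => Cpartial (fun k => Cmul (F k) (Sn lam t (S m) k)) N).
  assert (HQ: Ccv Q (Cpartial (fun j => Cmul (T j) (RC (t^j))) (S m))).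
  { apply (Ccv_ext (fun N => Cpartial (fun j => Cmul (RC (t^j)) (Cpartial (fun k => Cmul (Tc lam j k) (F k)) N)) (S m))).
    - intros N. unfold Q, Sn. 
      rewrite (Cpartial_ext (fun k => Cmul (F k) (Cpartial (fun j => Cmul (Tc lam j k) (RC (t ^ j))) (S m)))
         (fun k => Cpartial (fun j => Cmul (RC (t^j)) (Cmul (Tc lam j k) (F k))) (S m))).
      rewrite Cpartial_exchange. apply Cpartial_ext. intros j _. rewrite Cpartial_scal. reflexivity.
      intros k _. rewrite <- Cpartial_scal. apply Cpartial_ext. intros; ring.
    - rewrite (Cpartial_ext (fun j => Cmul (T j) (RC (t ^ j))) (fun j => Cmul (RC (t^j)) (T j))) by (intros; ring).
      apply (Ccv_finsum (fun j N => Cmul (RC (t ^ j)) (Cpartial (fun k => Cmul (Tc lam j k) (F k)) N))).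
      intros j Hj. apply Ccv_scal. apply HT; auto. }
  pose proof (Ccv_sub _ _ _ _ HV HQ) as HD.
  apply (Ccv_norm_le _ _ _ HD). intros N.
  unfold Q. rewrite <- Cpartial_sub.
  rewrite (Cpartial_ext _ (fun k => Cmul (F k) (En lam t (S m) k))).
  2: { intros k _. unfold En. ring. }
  eapply Rle_trans. apply Cpartial_norm.
  apply (Rle_trans _ (rsum (fun k => t^(S m) / R1^(S m) * ((INR k+1)^(S m) * R1^k * Cmod (F k))) N)).
  - apply rsum_le. intros k _. rewrite Cmod_mul. pose proof (En_bound lam t R1 m k ltac:(lra) HR1 Ht Hz).
    pose proof (Cmod_nonneg (F k)).
    replace (t ^ S m / R1 ^ S m * ((INR k + 1) ^ S m * R1 ^ k * Cmod (F k))) with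
      (Cmod (F k) * (t ^ S m * ((INR k + 1) ^ S m * R1 ^ k / R1 ^ S m))) by (field; apply pow_nonzero; lra).
    apply Rmult_le_compat_l; auto.
  - rewrite rsum_scal. replace (t ^ S m * (L / R1 ^ S m)) with (t ^ S m / R1 ^ S m * L) by (field; apply pow_nonzero; lra).
    apply Rmult_le_compat_l. unfold Rdiv; apply Rmult_le_pos. apply pow_le; auto. apply Rlt_le, Rinv_0_lt_compat, pow_lt; lra.
    apply rsum_le_lim; auto. intros k. apply Rmult_le_pos. apply Rmult_le_pos; apply pow_le; try lra.
    pose proof (pos_INR k); lra. apply Cmod_nonneg.
Qed.

End TaylorMain.


Lemma blaschke_repeat lam n z : blaschke (repeat lam n) z = Cpow (blaschke_factor lam z) n.
Proof. induction n; simpl; auto. rewrite IHn; reflexivity. Qed.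

Lemma Cmod_C1 : Cmod C1 = 1.
Proof. change C1 with (RC 1). rewrite Cmod_RC. apply Rabs_R1. Qed.

Lemma bf_bound lam t R1 : 0 <= t -> Cmod lam + t <= R1 -> R1 < 1 ->
  Cmod (blaschke_factor lam (zt lam t)) <= t / (1 - R1).
Proof. intros Ht Hl HR. pose proof (Cmod_nonneg lam).
  assert (Hz: Cmod (zt lam t) <= R1). { unfold zt. eapply Rle_trans. apply Cmod_add. rewrite Cmod_RC, Rabs_right; lra. }
  set (w := Csub C1 (Cmul (Cconj lam) (zt lam t))).
  assert (Hw: 1 - R1 <= Cmod w).
  { unfold w. pose proof (Cmod_sub_rev C1 (Cmul (Cconj lam) (zt lam t))). rewrite Cmod_C1, Cmod_mul, Cmod_conj in H0.
    pose proof (Cmod_nonneg (zt lam t)). assert (Cmod lam * Cmod (zt lam t) <= R1) by nra. lra. }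
  unfold blaschke_factor. fold w. rewrite Cmod_div by (apply Cnorm2_pos_of_mod; lra).
  replace (Csub lam (zt lam t)) with (Copp (RC t)) by (unfold zt; ring).
  rewrite Cmod_opp, Cmod_RC, Rabs_right by lra.
  unfold Rdiv. apply Rmult_le_compat_l; auto. apply Rinv_le_contravar; lra.
Qed.

Lemma fst_mul_RC a x : fst (Cmul a (RC x)) = fst a * x.
Proof. unfold Cmul, RC; simpl; ring. Qed.
Lemma snd_mul_RC a x : snd (Cmul a (RC x)) = snd a * x.
Proof. unfold Cmul, RC; simpl; ring. Qed.

Lemma vanish n lam f g : (1 <= n)%nat -> inD lam -> is_hol f -> is_hol g -> same_trace (repeat lam n) f g ->
  forall j, (j < n)%nat -> Ccv (Cpartial (fun k => Cmul (Tc lam j k) (Csub (f k) (g k)))) C0.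
Proof.
  intros Hn Hlam Hf Hg [h [Hh Htr]].
  destruct n as [|m]. lia.
  unfold inD in Hlam. set (r := Cmod lam) in *. pose proof (Cmod_nonneg lam) as Hr0. fold r in Hr0.
  set (R1 := (1 + r)/2).
  assert (HR: Cmod lam < R1 < 1) by (unfold R1; fold r; lra).
  set (F := fun k => Csub (f k) (g k)).
  destruct (hol_poly_sum f R1 (S m) Hf ltac:(unfold R1; lra)) as [Lf HLf].
  destruct (hol_poly_sum g R1 (S m) Hg ltac:(unfold R1; lra)) as [Lg HLg].
  assert (HFs: exists L, Un_cv (rsum (fun k => (INR k+1)^(S m) * R1^k * Cmod (F k))) L).
  { apply (rsum_comp _ (fun k => (INR k+1)^(S m) * R1^k * Cmod (f k) + (INR k+1)^(S m) * R1^k * Cmod (g k)) (Lf + Lg)).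
    - intros k. unfold F. pose proof (Cmod_sub (f k) (g k)).
      assert (0 <= (INR k+1)^(S m) * R1^k) by (apply Rmult_le_pos; apply pow_le; [pose proof (pos_INR k)|unfold R1]; lra).
      rewrite Rabs_right by (apply Rle_ge; apply Rmult_le_pos; auto; apply Cmod_nonneg). nra.
    - apply (Un_cv_ext (fun N => rsum (fun k => (INR k + 1) ^ S m * R1 ^ k * Cmod (f k)) N + rsum (fun k => (INR k + 1) ^ S m * R1 ^ k * Cmod (g k)) N)).
      intros; rewrite rsum_plus; auto. apply CV_plus; auto. }
  destruct HFs as [L HF].
  assert (HT: forall j, exists T, (j < S m)%nat -> Ccv (Cpartial (fun k => Cmul (Tc lam j k) (F k))) T).
  { intros j. destruct (Compare_dec.lt_dec j (S m)).
    - destruct (T_exists lam R1 F m L HR HF j ltac:(lia)) as [T HT]. exists T; auto.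
    - exists C0. intros; lia. }
  set (T := fun j => proj1_sig (constructive_indefinite_description _ (HT j))).
  assert (HT': forall j, (j < S m)%nat -> Ccv (Cpartial (fun k => Cmul (Tc lam j k) (F k))) (T j)).
  { intros j Hj. unfold T. destruct (constructive_indefinite_description _ (HT j)). simpl; auto. }
  destruct (hol_bound h R1 Hh ltac:(unfold R1; lra)) as [H HH].
  set (C := H / (1 - R1)^(S m) + L / R1^(S m)).
  assert (Hpoly: forall t, 0 < t <= R1 - r -> Cmod (Cpartial (fun j => Cmul (T j) (RC (t^j))) (S m)) <= C * t^(S m)).
  { intros t Ht. set (z := zt lam t).
    assert (Hz: Cmod z <= R1). { unfold z, zt. eapply Rle_trans. apply Cmod_add. rewrite Cmod_RC, Rabs_right; fold r; lra. }
    assert (HzD: inD z) by (unfold inD; lra).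
    destruct (Hf z HzD) as [sf Hsf]. destruct (Hg z HzD) as [sg Hsg]. destruct (Hh z HzD) as [sh Hsh].
    pose proof (Htr z HzD sf sg sh Hsf Hsg Hsh) as Heq.
    assert (HV: Ccv (Cpartial (fun k => Cmul (F k) (Cpow z k))) (Csub sf sg)).
    { apply (Ccv_ext (fun N => Csub (Cpartial (fun k => Cmul (f k) (Cpow z k)) N) (Cpartial (fun k => Cmul (g k) (Cpow z k)) N))).
      intros N. rewrite <- Cpartial_sub. apply Cpartial_ext. intros; unfold F; ring.
      apply Ccv_sub; auto. }
    pose proof (taylor_est lam R1 F m L HR HF t (Csub sf sg) T ltac:(lra) ltac:(fold r; lra) HV HT') as Hte.
    assert (HVb: Cmod (Csub sf sg) <= t^(S m) * (H / (1-R1)^(S m))).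
    { rewrite Heq, Cmod_mul, blaschke_repeat, Cmod_pow.
      pose proof (bf_bound lam t R1 ltac:(lra) ltac:(fold r; lra) ltac:(lra)).
      pose proof (HH z sh Hz Hsh). pose proof (Cmod_nonneg sh). pose proof (Cmod_nonneg (blaschke_factor lam z)).
      assert (Cmod (blaschke_factor lam z) ^ S m <= (t / (1-R1))^(S m)) by (apply pow_incr; split; auto).
      unfold Rdiv in H4. rewrite Rpow_mult_distr in H4. rewrite pow_inv in H4.
      replace (t ^ S m * (H / (1 - R1) ^ S m)) with (t ^ S m * / (1 - R1) ^ S m * H) by (unfold Rdiv; ring).
      apply Rmult_le_compat; auto. apply pow_le; auto. }
    set (P := Cpartial (fun j => Cmul (T j) (RC (t ^ j))) (S m)) in *.
    assert (P = Csub (Csub sf sg) (Csub (Csub sf sg) P)) by ring.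
    rewrite H0. eapply Rle_trans. apply Cmod_sub. unfold C.
    replace ((H / (1 - R1) ^ S m + L / R1 ^ S m) * t ^ S m) with (t ^ S m * (H / (1 - R1) ^ S m) + t ^ S m * (L / R1 ^ S m)) by ring.
    lra. }
  assert (Hre: forall j, (j < S m)%nat -> fst (T j) = 0).
  { apply (poly_zero (S m) (fun j => fst (T j)) C (R1 - r)). unfold R1; lra.
    intros t Ht. specialize (Hpoly t Ht).
    eapply Rle_trans. 2: apply Hpoly.
    rewrite (rsum_ext _ (fun j => fst (Cmul (T j) (RC (t^j))))) by (intros; rewrite fst_mul_RC; auto).
    rewrite <- Cpartial_fst. apply Cmod_fst. }
  assert (Him: forall j, (j < S m)%nat -> snd (T j) = 0).
  { apply (poly_zero (S m) (fun j => snd (T j)) C (R1 - r)). unfold R1; lra.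
    intros t Ht. specialize (Hpoly t Ht).
    eapply Rle_trans. 2: apply Hpoly.
    rewrite (rsum_ext _ (fun j => snd (Cmul (T j) (RC (t^j))))) by (intros; rewrite snd_mul_RC; auto).
    rewrite <- Cpartial_snd. apply Cmod_snd. }
  intros j Hj. replace C0 with (T j). apply HT'; auto. apply Cx_eq; simpl; auto.
Qed.


Section Comb.
Variables (s : R) (a : nat).
Hypothesis Hs : 0 <= s < 1.

Definition uu (k : nat) : R := (INR k + 1) * (binom k a)^2 * s^(k - a).
Definition vv (k : nat) : R := (INR k + 1) * uu k.
Definition ZZ (k : nat) : R := match k with O => 0 | S k' => s * (INR k' + INR a + 2) * uu k' end.

Lemma uu_nonneg k : 0 <= uu k.
Proof. unfold uu. apply Rmult_le_pos. apply Rmult_le_pos. pose proof (pos_INR k); lra.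
  apply pow2_ge_0. apply pow_le; lra. Qed.
Lemma vv_nonneg k : 0 <= vv k.
Proof. unfold vv. apply Rmult_le_pos. pose proof (pos_INR k); lra. apply uu_nonneg. Qed.

Lemma uu_lt k : (k < a)%nat -> uu k = 0.
Proof. intros H. unfold uu. rewrite binom_gt by auto. ring. Qed.

Lemma WW_nonneg k : 0 <= (INR k - INR a) * uu k - ZZ k.
Proof. destruct (Compare_dec.le_lt_dec k a) as [Hk|Hk].
  - assert (HZ: ZZ k = 0). { destruct k. reflexivity. simpl. rewrite uu_lt by lia. ring. }
    rewrite HZ. destruct (Nat.eq_dec k a) as [E|E].
    + subst. rewrite Rminus_diag, Rmult_0_l. lra.
    + rewrite uu_lt by lia. lra.
  - destruct k as [|K']. lia. simpl ZZ.
    unfold uu. set (c := binom (S K') a). set (d := binom K' a).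
    assert (Hcd: (INR K' + 1) * d = (INR (S K') - INR a) * c).
    { unfold c, d. rewrite binom_absorb. rewrite <- binom_rel. ring. }
    replace (S K' - a)%nat with (S (K' - a)) by lia. simpl pow at 2.
    set (sg := s^(K'-a)). assert (0 <= sg) by (apply pow_le; lra).
    rewrite S_INR in *. set (k := INR K') in *. set (x := INR a) in *.
    assert (x + 1 <= k + 1). { unfold x, k. rewrite <- !S_INR. apply le_INR. lia. }
    assert (0 <= x) by apply pos_INR.
    assert (E: (k + 1 - x) * ((k + 1 + 1) * c ^ 2 * (s * sg)) - s * (k + x + 2) * ((k + 1) * d ^ 2 * sg)
       = s * sg * c^2 * (k + 1 - x) * (x * x + x) / (k + 1)).
    { assert (Hd: d = (k + 1 - x) * c / (k + 1)). { apply (Rmult_eq_reg_l (k+1)); [|lra]. rewrite Hcd. field. lra. }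
      rewrite Hd. field. lra. }
    rewrite E. unfold Rdiv. apply Rmult_le_pos; [|apply Rlt_le, Rinv_0_lt_compat; lra].
    apply Rmult_le_pos. apply Rmult_le_pos. apply Rmult_le_pos. nra. apply pow2_ge_0. lra. nra.
Qed.

Lemma sbp K : (1 - s) * rsum vv K - (INR a + 1) * (1 + s) * rsum uu K + ZZ K >= 0.
Proof. induction K. simpl. lra.
  simpl rsum. pose proof (WW_nonneg K).
  assert (ZZ (S K) = s * (INR K + INR a + 2) * uu K) by reflexivity.
  unfold vv at 2. lra. Qed.

Lemma binom_pow_bound k x : s <= x -> 0 < x -> (binom k a)^2 * s^(k - a) <= (INR k + 1)^(2*a) * x^k / x^a.
Proof. intros Hx Hx0. destruct (Compare_dec.le_lt_dec a k).
  - replace (x^k) with (x^(k-a) * x^a) by (rewrite <- pow_add; f_equal; lia).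
    replace ((INR k + 1) ^ (2 * a) * (x ^ (k - a) * x ^ a) / x ^ a) with ((INR k + 1) ^ (2 * a) * x ^ (k - a)) by (field; apply pow_nonzero; lra).
    apply Rmult_le_compat. apply pow2_ge_0. apply pow_le; lra.
    rewrite pow_mult. replace ((INR k + 1)^2) with ((INR k + 1)*(INR k + 1)) by ring.
    rewrite Rpow_mult_distr. replace ((binom k a)^2) with (binom k a * binom k a) by ring.
    pose proof (binom_le k a). pose proof (binom_nonneg k a).
    apply Rmult_le_compat; auto. apply pow_incr; lra.
  - rewrite binom_gt by auto. replace (0^2) with 0 by ring. rewrite Rmult_0_l.
    unfold Rdiv. apply Rmult_le_pos. apply Rmult_le_pos; apply pow_le; [pose proof (pos_INR k)|]; lra.
    apply Rlt_le, Rinv_0_lt_compat, pow_lt; lra.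
Qed.

Lemma vv_summable : exists N, Un_cv (rsum vv) N.
Proof. set (x := (1+s)/2). destruct (poly_geom (2*a+2) x ltac:(unfold x; lra)) as [L HL].
  apply (rsum_comp _ (fun k => / x^a * ((INR k + 1)^(2*a+2) * x^k)) (/x^a * L)).
  2: apply rsum_cv_scal; auto.
  intros k. rewrite Rabs_right by (apply Rle_ge, vv_nonneg). unfold vv, uu.
  pose proof (binom_pow_bound k x ltac:(unfold x; lra) ltac:(unfold x; lra)).
  replace ((INR k + 1)^(2*a+2)) with ((INR k + 1)^(2*a) * ((INR k+1) * (INR k + 1))) by (rewrite pow_add; simpl; ring).
  replace ((INR k + 1) * ((INR k + 1) * binom k a ^ 2 * s ^ (k - a))) with ((INR k + 1) * (INR k + 1) * (binom k a ^ 2 * s ^ (k - a))) by ring.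
  replace (/ x ^ a * ((INR k + 1) ^ (2 * a) * ((INR k + 1) * (INR k + 1)) * x ^ k)) with
   ((INR k + 1) * (INR k + 1) * ((INR k + 1) ^ (2 * a) * x ^ k / x ^ a)) by (field; apply pow_nonzero; unfold x; lra).
  apply Rmult_le_compat_l; auto. pose proof (pos_INR k); nra.
Qed.

Lemma uu_summable : exists D, Un_cv (rsum uu) D.
Proof. destruct vv_summable as [N HN]. apply (rsum_comp _ vv N); auto.
  intros k. rewrite Rabs_right by (apply Rle_ge, uu_nonneg). unfold vv. pose proof (uu_nonneg k).
  pose proof (pos_INR k). nra. Qed.

Lemma ZZ_to0 : Un_cv ZZ 0.
Proof. destruct vv_summable as [N HN]. pose proof (rsum_terms0 _ _ HN) as H0.
  intros eps He. destruct (H0 (eps / (INR a + 2))) as [M HM]. apply Rdiv_lt_0_compat; auto. pose proof (pos_INR a); lra.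
  exists (S M). intros m Hm. destruct m as [|m']. lia. unfold Rdist in *. specialize (HM m' ltac:(lia)).
  rewrite Rminus_0_r in *. simpl ZZ. rewrite Rabs_right in * by (try apply Rle_ge; try apply vv_nonneg;
    apply Rmult_le_pos; [apply Rmult_le_pos; [lra| pose proof (pos_INR m'); pose proof (pos_INR a); lra] | apply uu_nonneg]).
  unfold vv in HM. pose proof (uu_nonneg m'). pose proof (pos_INR m'). pose proof (pos_INR a).
  assert (INR m' + INR a + 2 <= (INR a + 2) * (INR m' + 1)) by nra.
  assert (s * (INR m' + INR a + 2) <= (INR a + 2) * (INR m' + 1)) by nra.
  assert (s * (INR m' + INR a + 2) * uu m' <= (INR a + 2) * ((INR m' + 1) * uu m')).
  { rewrite <- Rmult_assoc. apply Rmult_le_compat_r; auto. }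
  apply (Rmult_lt_compat_l (INR a + 2)) in HM; [|lra]. replace ((INR a + 2) * (eps / (INR a + 2))) with eps in HM by (field; lra).
  rewrite Rabs_right in HM by (apply Rle_ge; apply Rmult_le_pos; lra). lra.
Qed.

Lemma uu_a : uu a = INR a + 1.
Proof. unfold uu. rewrite binom_diag, Nat.sub_diag. simpl; ring. Qed.

Lemma choose_K D c2 : Un_cv (rsum uu) D -> 0 <= c2 -> c2 * (1 - s) < (INR a + 1) * (1 + s) ->
  exists K, c2 * D < rsum vv K.
Proof. intros HD Hc2 Hlt.
  assert (HDpos: INR a + 1 <= D). { rewrite <- uu_a. apply (Rle_trans _ (rsum uu (S a))). simpl. pose proof (rsum_nonneg uu a uu_nonneg). lra.
    apply rsum_le_lim; auto. apply uu_nonneg. }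
  pose proof (pos_INR a).
  set (G := (INR a + 1) * (1 + s) * D - (1 - s) * c2 * D).
  assert (HG: 0 < G). { unfold G. assert (0 < D) by lra. nra. }
  destruct (HD (G / (2 * (INR a + 1) * (1 + s)))) as [K1 HK1]. apply Rdiv_lt_0_compat; auto. nra.
  destruct (ZZ_to0 (G/2)) as [K2 HK2]. lra.
  exists (K1 + K2)%nat. specialize (HK1 (K1 + K2)%nat ltac:(lia)). specialize (HK2 (K1+K2)%nat ltac:(lia)).
  unfold Rdist in *. pose proof (sbp (K1 + K2)).
  rewrite Rminus_0_r in HK2. pose proof (Rle_abs (ZZ (K1 + K2))).
  assert (rsum uu (K1 + K2) <= D) by (apply rsum_le_lim; auto; apply uu_nonneg).
  rewrite Rabs_left1 in HK1 by lra.
  assert ((INR a + 1) * (1 + s) * (D - rsum uu (K1 + K2)) < G / 2).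
  { apply (Rmult_lt_compat_l ((INR a + 1) * (1 + s))) in HK1. 2: nra.
    replace ((INR a + 1) * (1 + s) * (G / (2 * (INR a + 1) * (1 + s)))) with (G/2) in HK1 by (field; lra). lra. }
  assert ((1 - s) * (c2 * D) < (1 - s) * rsum vv (K1 + K2)).
  { unfold G in *. nra. }
  apply Rmult_lt_reg_l in H4; lra.
Qed.

End Comb.


Lemma Cnorm2_pow z k : Cnorm2 (Cpow z k) = Cnorm2 z ^ k.
Proof. induction k; simpl. unfold Cnorm2, C1; simpl; ring. rewrite Cnorm2_mul, IHk; ring. Qed.
Lemma Cnorm2_RC x : Cnorm2 (RC x) = x^2.
Proof. unfold Cnorm2, RC; simpl; ring. Qed.
Lemma Cnorm2_conj z : Cnorm2 (Cconj z) = Cnorm2 z.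
Proof. unfold Cnorm2, Cconj; simpl; ring. Qed.
Lemma Cmul_conj z : Cmul z (Cconj z) = RC (Cnorm2 z).
Proof. apply Cx_eq; unfold Cmul, Cconj, RC, Cnorm2; simpl; ring. Qed.
Lemma Cpartial_RC x N : Cpartial (fun k => RC (x k)) N = RC (rsum x N).
Proof. induction N; simpl. reflexivity. rewrite IHN. apply Cadd_RC. Qed.
Lemma RC0 : RC 0 = C0. Proof. reflexivity. Qed.

Definition phi (lam : Cx) (a k : nat) : Cx := Cmul (RC ((INR k + 1) * binom k a)) (Cpow lam (k - a)).

Lemma phi_norm lam a k : Cnorm2 (phi lam a k) = vv (Cnorm2 lam) a k.
Proof. unfold phi, vv, uu. rewrite Cnorm2_mul, Cnorm2_RC, Cnorm2_pow. ring. Qed.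

Lemma phi_decomp lam a k : phi lam a k = Cmul (RC (INR a + 1)) (Cadd (Cmul lam (Tc lam (S a) k)) (Tc lam a k)).
Proof. unfold phi, Tc. rewrite binom_absorb, binom_S.
  destruct (Compare_dec.le_lt_dec (S a) k).
  - replace (k - a)%nat with (S (k - S a)) by lia. simpl Cpow.
    rewrite <- Cmul_RC, <- (Cadd_RC (binom k a)). ring.
  - rewrite (binom_gt k (S a)) by lia. rewrite <- Cmul_RC, <- (Cadd_RC (binom k a)), RC0. ring.
Qed.

Lemma Cpartial_fin u K : (forall k, (K <= k)%nat -> u k = C0) -> Ccv (Cpartial u) (Cpartial u K).
Proof. intros H. apply (Ccv_ev (fun _ => Cpartial u K) _ _ K). 2: apply Ccv_const.
  intros N HN. induction HN. auto. simpl. rewrite <- IHHN, H by lia. apply Cx_eq; unfold Cadd, C0; simpl; ring. Qed.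

Lemma rsum_fin u K : (forall k, (K <= k)%nat -> u k = 0) -> Un_cv (rsum u) (rsum u K).
Proof. intros H eps He. exists K. intros m Hm. unfold Rdist.
  assert (rsum u m = rsum u K). { induction Hm. auto. simpl. rewrite IHHm, H by lia. ring. }
  rewrite H0, Rminus_diag, Rabs_R0. auto. Qed.

Lemma const_ineq (n : nat) r : (2 <= n)%nat -> 0 <= r < 1 ->
  INR n / (1 - r) * (((1 + r) ^ 2 - 2 / INR n - 2 * r / INR n) / (2 * (1 + r))) * (1 - r*r) <= (INR n - 1) * (1 + r*r).
Proof. intros Hn Hr. assert (2 <= INR n) by (replace 2 with (INR 2) by (simpl; ring); apply le_INR; auto).
  replace (INR n / (1 - r) * (((1 + r) ^ 2 - 2 / INR n - 2 * r / INR n) / (2 * (1 + r))) * (1 - r*r))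
   with ((INR n * (1 + r) * (1 + r) - 2 - 2 * r) / 2) by (field; lra).
  assert (E: (INR n - 1) * (1 + r*r) - (INR n * (1 + r) * (1 + r) - 2 - 2 * r) / 2 = (1-r)*(INR n*(1-r)/2 + r)) by field.
  assert (0 <= (1-r)*(INR n*(1-r)/2 + r)) by (apply Rmult_le_pos; nra). lra. Qed.


Lemma cs_term x y w mu u : 0 < w -> 0 < mu -> x * x = w * u -> 0 <= x -> 0 <= y ->
  x * y <= (mu * u + w * (y*y) / mu) / 2.
Proof. intros Hw Hmu Hx Hx0 Hy0.
  assert (u = x * x / w) by (rewrite Hx; field; lra). subst u.
  assert ((mu * (x * x / w) + w * (y * y) / mu) / 2 - x * y = (mu * x - w * y) * (mu * x - w * y) / (2 * mu * w)) by (field; lra).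
  assert (0 <= (mu * x - w * y) * (mu * x - w * y) / (2 * mu * w)).
  { unfold Rdiv. apply Rmult_le_pos. apply Rle_0_sqr. apply Rlt_le, Rinv_0_lt_compat. nra. }
  lra. Qed.

Theorem theoremB (n : nat) (lam : Cx) :
  (1 <= n)%nat -> inD lam ->
  0 <= ((1 + Cmod lam) ^ 2 - 2 / INR n - 2 * Cmod lam / INR n) / (2 * (1 + Cmod lam)) ->
  I_ge (repeat lam n) w_H2 w_Dirichlet
    (sqrt (INR n / (1 - Cmod lam)) *
     sqrt (((1 + Cmod lam) ^ 2 - 2 / INR n - 2 * Cmod lam / INR n) / (2 * (1 + Cmod lam)))).
Proof.
  intros Hn Hlam Hbr c' Hc'.
  unfold inD in Hlam. pose proof (Cmod_nonneg lam) as Hr0.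
  set (r := Cmod lam) in *.
  set (s := Cnorm2 lam).
  assert (Hsr: s = r * r) by (unfold s, r; rewrite Cmod_sq; auto).
  assert (Hs: 0 <= s < 1) by (rewrite Hsr; nra).
  destruct n as [|[|a]]. lia.
  { exfalso. simpl INR in Hbr.
    assert (((1 + r) ^ 2 - 2 / 1 - 2 * r / 1) / (2 * (1 + r)) < 0).
    { replace (((1 + r) ^ 2 - 2 / 1 - 2 * r / 1) / (2 * (1 + r))) with ((r - 1)/2) by (field; lra). lra. }
    lra. }
  set (Bk := ((1 + r) ^ 2 - 2 / INR (S (S a)) - 2 * r / INR (S (S a))) / (2 * (1 + r))) in *.
  set (X := INR (S (S a)) / (1 - r)).
  assert (HX: 0 <= X). { unfold X. unfold Rdiv. apply Rmult_le_pos. apply pos_INR. apply Rlt_le, Rinv_0_lt_compat; lra. }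
  set (c2 := (Rmax c' 0)^2).
  assert (Hc2: 0 <= c2) by (unfold c2; apply pow2_ge_0).
  assert (Hc2lt: c2 * (1 - s) < (INR a + 1) * (1 + s)).
  { pose proof (pos_INR a). unfold c2. destruct (Rle_dec c' 0).
    - rewrite Rmax_right by auto. replace (0^2) with 0 by ring. nra.
    - rewrite Rmax_left by lra.
      assert (c'^2 < X * Bk).
      { assert (E: (sqrt X * sqrt Bk)^2 = X * Bk).
        { rewrite Rpow_mult_distr. rewrite !pow2_sqrt; auto. }
        rewrite <- E. fold X in Hc'. nra. }
      pose proof (const_ineq (S (S a)) r ltac:(lia) ltac:(lra)). fold Bk in H1. fold X in H1.
      replace (INR (S (S a)) - 1) with (INR a + 1) in H1 by (rewrite !S_INR; ring).
      rewrite Hsr. assert (0 < 1 - r*r) by nra. nra. }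
  destruct (uu_summable s a Hs) as [D HD].
  assert (HDpos: INR a + 1 <= D).
  { rewrite <- (uu_a s a). apply (Rle_trans _ (rsum (uu s a) (S a))). simpl. pose proof (rsum_nonneg (uu s a) a (uu_nonneg s a Hs)). lra.
    apply rsum_le_lim; auto. apply uu_nonneg; auto. }
  pose proof (pos_INR a) as Ha0.
  destruct (choose_K s a Hs D c2 HD Hc2 Hc2lt) as [K HK].
  set (NK := rsum (vv s a) K) in *.
  assert (HNK: 0 < NK) by nra.
  assert (Hsq: 0 < sqrt NK) by (apply sqrt_lt_R0; auto).
  set (f := fun k => if Nat.ltb k K then Cmul (RC (/ sqrt NK)) (Cconj (phi lam a k)) else C0).
  assert (Hf0: forall k, (K <= k)%nat -> f k = C0).
  { intros k Hk. unfold f. destruct (Nat.ltb_spec k K); auto. lia. }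
  assert (Hfin: forall k, (k < K)%nat -> f k = Cmul (RC (/ sqrt NK)) (Cconj (phi lam a k))).
  { intros k Hk. unfold f. destruct (Nat.ltb_spec k K); auto. lia. }
  assert (Hfhol: is_hol f).
  { intros z _. exists (Cpartial (fun k => Cmul (f k) (Cpow z k)) K). apply Cpartial_fin.
    intros k Hk. rewrite Hf0 by auto. ring. }
  assert (Hfn: wnorm_sq w_H2 f 1).
  { unfold wnorm_sq. apply rsum_inf.
    replace 1 with (rsum (fun k => w_H2 k * Cnorm2 (f k)) K).
    apply rsum_fin. intros k Hk. rewrite Hf0 by auto. unfold Cnorm2, C0; simpl; ring.
    rewrite (rsum_ext _ (fun k => / NK * vv s a k)).
    rewrite rsum_scal. fold NK. field. lra.
    intros k Hk. rewrite Hfin by auto. unfold w_H2. rewrite Cnorm2_mul, Cnorm2_RC, Cnorm2_conj, phi_norm.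
    fold s. rewrite <- Rinv_pow by lra. rewrite pow2_sqrt by lra. ring. }
  exists f. split. split; auto. exists 1; auto. split.
  { intros l Hl. unfold wnorm_sq in *. rewrite (uniqueness_sum _ _ _ Hl Hfn). rewrite sqrt_1. lra. }
  intros g [Hgh _] Htr l Hl.
  assert (Hpf: Ccv (Cpartial (fun k => Cmul (phi lam a k) (f k))) (RC (sqrt NK))).
  { replace (RC (sqrt NK)) with (Cpartial (fun k => Cmul (phi lam a k) (f k)) K).
    apply Cpartial_fin. intros k Hk. rewrite Hf0 by auto. ring.
    rewrite (Cpartial_ext _ (fun k => RC (/ sqrt NK * vv s a k))).
    rewrite Cpartial_RC, rsum_scal. fold NK. f_equal.
    rewrite <- (sqrt_sqrt NK) at 2 by lra. field. lra.
    intros k Hk. rewrite Hfin by auto.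
    replace (Cmul (phi lam a k) (Cmul (RC (/ sqrt NK)) (Cconj (phi lam a k)))) with
       (Cmul (RC (/ sqrt NK)) (Cmul (phi lam a k) (Cconj (phi lam a k)))) by ring.
    rewrite Cmul_conj, Cmul_RC, phi_norm. reflexivity. }
  assert (HpF: Ccv (Cpartial (fun k => Cmul (phi lam a k) (Csub (f k) (g k)))) C0).
  { pose proof (vanish (S (S a)) lam f g Hn Hlam Hfhol Hgh Htr) as V.
    pose proof (V a ltac:(lia)) as V0. pose proof (V (S a) ltac:(lia)) as V1.
    apply (Ccv_ext (fun N => Cmul (RC (INR a + 1)) (Cadd (Cmul lam (Cpartial (fun k => Cmul (Tc lam (S a) k) (Csub (f k) (g k))) N))
        (Cpartial (fun k => Cmul (Tc lam a k) (Csub (f k) (g k))) N)))).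
    - intros N. rewrite <- Cpartial_scal, <- Cpartial_plus, <- Cpartial_scal. apply Cpartial_ext.
      intros k _. rewrite phi_decomp. ring.
    - replace C0 with (Cmul (RC (INR a + 1)) (Cadd (Cmul lam C0) C0)) by ring.
      apply Ccv_scal. apply Ccv_plus; auto. apply Ccv_scal; auto. }
  assert (Hpg: Ccv (Cpartial (fun k => Cmul (phi lam a k) (g k))) (Csub (RC (sqrt NK)) C0)).
  { apply (Ccv_ext (fun N => Csub (Cpartial (fun k => Cmul (phi lam a k) (f k)) N) (Cpartial (fun k => Cmul (phi lam a k) (Csub (f k) (g k))) N))).
    intros N. rewrite <- Cpartial_sub. apply Cpartial_ext. intros; ring.
    apply Ccv_sub; auto. }
  replace (Csub (RC (sqrt NK)) C0) with (RC (sqrt NK)) in Hpg by ring.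
  assert (Hl2: forall N, rsum (fun k => (INR k + 1) * Cnorm2 (g k)) N <= l).
  { intros N. apply rsum_le_lim. apply rsum_inf. exact Hl. intros k. apply Rmult_le_pos.
    pose proof (pos_INR k); lra. apply Cnorm2_nonneg. }
  assert (Hmu: forall mu, 0 < mu -> sqrt NK <= (mu * D + l / mu) / 2).
  { intros mu Hmu. rewrite <- (Rabs_right (sqrt NK)) by lra. rewrite <- Cmod_RC.
    apply (Ccv_norm_le _ _ _ Hpg). intros N.
    eapply Rle_trans. apply Cpartial_norm.
    apply (Rle_trans _ (rsum (fun k => (mu * uu s a k + (INR k + 1) * Cnorm2 (g k) / mu) / 2) N)).
    - apply rsum_le. intros k _. rewrite Cmod_mul.
      rewrite <- Cmod_sq. apply cs_term. pose proof (pos_INR k); lra. auto.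
      rewrite Cmod_sq, phi_norm. reflexivity. apply Cmod_nonneg. apply Cmod_nonneg.
    - rewrite (rsum_ext _ (fun k => / 2 * mu * uu s a k + / (2 * mu) * ((INR k + 1) * Cnorm2 (g k)))) by (intros; field; lra).
      rewrite rsum_plus. rewrite !rsum_scal. pose proof (Hl2 N).
      assert (rsum (uu s a) N <= D) by (apply rsum_le_lim; auto; apply uu_nonneg; auto).
      assert (/ 2 * mu * rsum (uu s a) N <= / 2 * mu * D) by (apply Rmult_le_compat_l; lra).
      assert (/ (2 * mu) * rsum (fun k => (INR k + 1) * Cnorm2 (g k)) N <= / (2 * mu) * l).
      { apply Rmult_le_compat_l; auto. apply Rlt_le, Rinv_0_lt_compat; lra. }
      replace ((mu * D + l / mu) / 2) with (/ 2 * mu * D + / (2 * mu) * l) by (field; lra). lra. }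
  assert (HDp: 0 < D) by lra.
  specialize (Hmu (sqrt NK / D) ltac:(apply Rdiv_lt_0_compat; lra)).
  assert (NK <= l * D).
  { replace ((sqrt NK / D * D + l / (sqrt NK / D)) / 2) with ((sqrt NK + l * D / sqrt NK) / 2) in Hmu by (field; lra).
    assert (sqrt NK * sqrt NK <= l * D).
    { apply (Rmult_le_compat_l (sqrt NK)) in Hmu; [|lra].
      replace (sqrt NK * ((sqrt NK + l * D / sqrt NK) / 2)) with ((sqrt NK * sqrt NK + l * D)/2) in Hmu by (field; lra).
      lra. }
    rewrite sqrt_sqrt in H by lra. auto. }
  assert (c2 < l). { apply (Rmult_lt_reg_r D); auto. lra. }
  assert (Rmax c' 0 <= sqrt l).
  { rewrite <- (sqrt_pow2 (Rmax c' 0)) by apply Rmax_r. apply sqrt_le_1_alt. fold c2. lra. }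
  pose proof (Rmax_l c' 0). lra.
Qed.
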